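(* Let $G=A\oplus T$ be an abelian group where $T$ is the torsion subgroup of $G$ (so $A\cong G/T$ is torsion-free). Then $G$ is strongly co-Hopfian if and only if both $T$ and $A$ are strongly co-Hopfian.
   Context: All groups are abelian. A group $G$ is strongly co-Hopfian if for every endomorphism $f$ of $G$ there is $n\in\mathbb N$ with $f^n(G)=f^{n+1}(G)$. *)

(* Defs.v *)
From HB Require Import structures.
From mathcomp Require Import all_boot all_order all_algebra.
Set Implicit Arguments. Unset Strict Implicit. Unset Printing Implicit Defensive.
Import GRing.Theory.
Local Open Scope ring_scope.

Definition in_image (G : zmodType) (g : G -> G) (y : G) : Prop :=
  exists x : G, g x = y.

Definition strongly_coHopfian (G : zmodType) : Prop :=
  forall f : {additive G -> G}, exists n : nat,
    forall y : G, in_image (iter n f) y <-> in_image (iter n.+1 f) y.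

Definition torsion_group (G : zmodType) : Prop :=
  forall x : G, exists n : nat, (0 < n)%N /\ x *+ n = 0.

Definition torsion_free (G : zmodType) : Prop :=
  forall (x : G) (n : nat), (0 < n)%N -> x *+ n = 0 -> x = 0.

(* Main.v *)
Require Import Defs.
From HB Require Import structures.
From mathcomp Require Import all_boot all_order all_algebra.

Import GRing.Theory.
Local Open Scope ring_scope.

Definition mkadd (U : zmodType) (f : U -> U) (H : zmod_morphism f) : {additive U -> U} :=
  HB.pack f (GRing.isZmodMorphism.Build U U f H).
Arguments mkadd {U f}.

Lemma img_down (U : zmodType) (g : U -> U) n y :
  in_image (iter n.+1 g) y -> in_image (iter n g) y.
Proof. by case=> x <-; exists (g x); rewrite iterSr. Qed.

Lemma stab_up (U : zmodType) (g : U -> U) M :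
  (forall y, in_image (iter M g) y <-> in_image (iter M.+1 g) y) ->
  forall k y, in_image (iter M g) y -> in_image (iter (k + M) g) y.
Proof.
move=> H; elim=> [|k IH] y hy //.
have [w hw] := (H y).1 hy.
have [v hv] := IH _ (ex_intro _ w erefl).
exists v; rewrite addSn iterS hv -hw iterS //.
Qed.

Lemma iter_addD (U : zmodType) (g : {additive U -> U}) j x y :
  iter j g (x + y) = iter j g x + iter j g y.
Proof. by elim: j => //= j ->; rewrite raddfD. Qed.

Lemma iter_addB (U : zmodType) (g : {additive U -> U}) j x y :
  iter j g (x - y) = iter j g x - iter j g y.
Proof. by elim: j => //= j ->; rewrite raddfB. Qed.

Theorem mainTheorem5 (A T : zmodType) (hT : torsion_group T) (hA : torsion_free A) :
  strongly_coHopfian (A * T)%type <-> (strongly_coHopfian T /\ strongly_coHopfian A).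
Proof.
split.
- move=> hG; split.
  + move=> g.
    pose F (x : (A * T)%type) := (x.1, g x.2).
    have FB : zmod_morphism F.
      by move=> x y; rewrite /F /= raddfB.
    have [n hn] := hG (mkadd FB).
    have itF : forall j x, iter j (mkadd FB) x = (x.1, iter j g x.2).
      by elim=> [[]//|j IH] x; rewrite iterS IH.
    exists n => y; split; last exact: img_down.
    case=> x hx.
    have : in_image (iter n (mkadd FB)) (0, y).
      by exists (0, x); rewrite itF hx.
    case/hn => w; rewrite itF => hw.
    by exists w.2; exact: (congr1 snd hw).
  + move=> g.
    pose F (x : (A * T)%type) := (g x.1, x.2).
    have FB : zmod_morphism F.
      by move=> x y; rewrite /F /= raddfB.
    have [n hn] := hG (mkadd FB).
    have itF : forall j x, iter j (mkadd FB) x = (iter j g x.1, x.2).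
      by elim=> [[]//|j IH] x; rewrite iterS IH.
    exists n => y; split; last exact: img_down.
    case=> x hx.
    have : in_image (iter n (mkadd FB)) (y, 0).
      by exists (x, 0); rewrite itF hx.
    case/hn => w; rewrite itF => hw.
    by exists w.1; exact: (congr1 fst hw).
- case=> hT' hA' f.
  pose al (a : A) := (f (a, 0)).1.
  have alB : zmod_morphism al.
    move=> a b; rewrite /al.
    have -> : ((a - b, 0) : (A * T)%type) = (a, 0) - (b, 0) by congr pair; rewrite /= ?subrr.
    by rewrite raddfB.
  pose ga (t : T) := (f (0, t)).2.
  have gaB : zmod_morphism ga.
    move=> a b; rewrite /ga.
    have -> : ((0, a - b) : (A * T)%type) = (0, a) - (0, b) by congr pair; rewrite /= ?subrr.
    by rewrite raddfB.
  pose Al := mkadd alB.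
  pose Ga := mkadd gaB.
  have F1 : forall t, (f (0, t)).1 = 0.
    move=> t; have [m [m0 hm]] := hT t.
    apply: (hA _ m m0).
    have -> : (f (0, t)).1 *+ m = (f ((0, t) *+ m)).1.
      by rewrite raddfMn; elim: m {m0 hm} => // m IH; rewrite !mulrS /= IH.
    have e : forall k, ((0, t) *+ k : (A * T)%type) = (0, t *+ k).
      elim=> [|k IH] //; rewrite !mulrS IH.
      by apply: (@f_equal2 _ _ _ pair) => //=; rewrite addr0.
    rewrite e hm.
    have -> : ((0, 0) : (A * T)%type) = 0 by [].
    by rewrite raddf0.
  have F2 : forall x, (f x).1 = Al x.1.
    move=> [a t].
    have -> : ((a, t) : (A * T)%type) = (a, 0) + (0, t) by apply: (@f_equal2 _ _ _ pair); rewrite /= ?addr0 ?add0r.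
    by rewrite raddfD /= F1 !addr0.
  have F3 : forall j x, (iter j f x).1 = iter j Al x.1.
    by elim=> // j IH x; rewrite !iterS F2 IH.
  have F4 : forall j t, iter j f (0, t) = (0, iter j Ga t).
    elim=> // j IH t; rewrite !iterS IH.
    by rewrite [LHS]surjective_pairing F1.
  have [N hN] := hA' Al.
  have [M hM] := hT' Ga.
  exists (M + N) => y; split; last exact: img_down.
  case=> x hx.
  have [c hc] := (hN (iter N Al x.1)).1 (ex_intro _ x.1 erefl).
  pose x' := x - f (c, 0).
  have hx'1 : iter N Al x'.1 = 0.
    have -> : x'.1 = x.1 - Al c by rewrite /x' /= F2.
    by rewrite iter_addB -iterSr hc subrr.
  pose z := iter N f x'.
  have hz : z = (0, z.2) by rewrite [LHS]surjective_pairing /z F3 hx'1.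
  have [u hu] := @stab_up _ _ _ hM N.+1 _ (ex_intro (fun w => iter M Ga w = iter M Ga z.2) z.2 erefl).
  have e1 : iter (M + N) f x' = iter (M + N).+1 f (0, u).
    by rewrite iterD -/z hz !F4 -hu addSn addnC.
  exists ((0, u) + (c, 0)).
  rewrite iter_addD -e1 iterSr -iter_addD /x' subrK //.
Qed.
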